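(* If a complete edge-colored graph $G=(V,E_1,\dots,E_k)$ contains a rainbow triangle, then $G$ is not a complete edge-colored permutation graph.
   Context: A complete $k$-edge-colored graph $G=(V,E_1,\dots,E_k)$ is the complete graph on a finite set $V$ whose edges are partitioned into $k$ nonempty color classes $E_i$; $G_{|i}=(V,E_i)$. A rainbow triangle is a set of three vertices whose three edges have pairwise distinct colors. A labeling is a bijection $\ell:V\to\{1,\dots,|V|\}$. A graph $(V,E)$ with labeling $\ell$ is a simple permutation graph of a permutation $\pi$ of $\{1,\dots,|V|\}$ if for all $u,v$ with $\ell(u)>\ell(v)$: $\{u,v\}\in E$ iff $\pi^{-1}(\ell(u))<\pi^{-1}(\ell(v))$. $G$ is a complete edge-colored permutation graph if there exist a labeling $\ell$ and permutations $\pi_1,\dots,\pi_k$ with $(G_{|i},\ell)$ a simple permutation graph of $\pi_i$ for all $i$. *)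

(* Defs.v *)
From mathcomp Require Import all_boot all_fingroup.
Set Implicit Arguments. Unset Strict Implicit. Unset Printing Implicit Defensive.

(* A complete k-edge-colored graph on the finite vertex set V is given by a
   coloring [col : V -> V -> 'I_k] of the edges {u,v} (u <> v) of the complete
   graph: [col u v] is the color of edge {u,v}.  Values [col u u] are irrelevant. *)
Definition complete_edge_colored (V : finType) (k : nat) (col : V -> V -> 'I_k) :=
  (forall u v, u != v -> col u v = col v u) /\
  (forall i : 'I_k, exists u v, u != v /\ col u v = i).

Definition color_class (V : finType) (k : nat) (col : V -> V -> 'I_k) (i : 'I_k)
  : rel V := fun u v => (u != v) && (col u v == i).

Definition has_rainbow_triangle (V : finType) (k : nat) (col : V -> V -> 'I_k) :=
  exists a b c : V, [/\ a != b, b != c & a != c] /\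
    [/\ col a b != col b c, col b c != col a c & col a b != col a c].

(* (V,E) with labeling ell (values 0..n-1 instead of 1..n) is a simple
   permutation graph of pi. *)
Definition simple_perm_graph (V : finType) (n : nat) (E : rel V)
  (ell : V -> 'I_n) (pi : {perm 'I_n}) :=
  forall u v : V, ell v < ell u ->
    (E u v <-> (pi^-1)%g (ell u) < (pi^-1)%g (ell v)).

Definition complete_edge_colored_perm_graph (V : finType) (k : nat)
  (col : V -> V -> 'I_k) :=
  exists ell : V -> 'I_#|V|, bijective ell /\
  exists pis : 'I_k -> {perm 'I_#|V|},
    forall i : 'I_k, simple_perm_graph (color_class col i) ell (pis i).

(* Main.v *)
Require Import Defs.
From mathcomp Require Import all_boot all_fingroup.

Lemma key (V : finType) (k : nat) (col : V -> V -> 'I_k)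
  (hs : forall u v, u != v -> col u v = col v u)
  (ell : V -> 'I_#|V|) (pis : 'I_k -> {perm 'I_#|V|})
  (hp : forall i : 'I_k, simple_perm_graph (color_class col i) ell (pis i))
  (x y z : V) :
  ell x < ell y -> ell y < ell z ->
  col x z != col x y -> col x z != col y z -> False.
Proof.
move=> lxy lyz n1 n2.
have nxy : x != y by apply/eqP=> E; rewrite E ltnn in lxy.
have nyz : y != z by apply/eqP=> E; rewrite E ltnn in lyz.
have nxz : x != z by apply/eqP=> E; rewrite E in lxy; move: (ltn_trans lxy lyz); rewrite ltnn.
have h := hp (col x z).
have [A _] := h z x (ltn_trans lxy lyz).
have hzx : color_class col (col x z) z x.
  by rewrite /color_class eq_sym nxz /= (hs z x) // eq_sym.
have l1 := A hzx.
have [_ B] := h y x lxy.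
have [_ C] := h z y lyz.
have l2 : ~~ ((pis (col x z))^-1%g (ell y) < (pis (col x z))^-1%g (ell x)).
  apply/negP=> H; move: (B H); rewrite /color_class (hs y x) ?(eq_sym y) //.
  by case/andP=> _ /eqP E; rewrite E eqxx in n1.
have l3 : ~~ ((pis (col x z))^-1%g (ell z) < (pis (col x z))^-1%g (ell y)).
  apply/negP=> H; move: (C H); rewrite /color_class (hs z y) ?(eq_sym z) //.
  by case/andP=> _ /eqP E; rewrite E eqxx in n2.
rewrite -!leqNgt in l2 l3.
by move: (leq_ltn_trans l2 (leq_ltn_trans l3 l1)); rewrite ltnn.
Qed.

Theorem lemma3p10 (V : finType) (k : nat) (col : V -> V -> 'I_k) :
  complete_edge_colored col ->
  has_rainbow_triangle col ->
  ~ complete_edge_colored_perm_graph col.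
Proof.
move=> [hs _] [a [b [c [[nab nbc nac] [r1 r2 r3]]]]] [ell [bij [pis hp]]].
have inj := bij_inj bij.
have e1 : col b a = col a b by rewrite hs // eq_sym.
have e2 : col c b = col b c by rewrite hs // eq_sym.
have e3 : col c a = col a c by rewrite hs // eq_sym.
have K := @key _ _ col hs _ _ hp.
have dl : forall u v, u != v -> nat_of_ord (ell u) != ell v.
  by move=> u v /eqP neq; apply/eqP=> E; apply: neq; apply: inj; apply: val_inj.
have dab := dl _ _ nab. have dbc := dl _ _ nbc. have dac := dl _ _ nac.
case: (ltngtP (ell a) (ell b)) => hab; last by rewrite hab eqxx in dab.
- case: (ltngtP (ell b) (ell c)) => hbc; last by rewrite hbc eqxx in dbc.
  + apply: (K a b c hab hbc); rewrite ?e1 ?e2 ?e3 // eq_sym //.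
  + case: (ltngtP (ell a) (ell c)) => hac; last by rewrite hac eqxx in dac.
    * apply: (K a c b hac hbc); rewrite ?e1 ?e2 ?e3 // eq_sym //.
    * apply: (K c a b hac hab); rewrite ?e1 ?e2 ?e3 // eq_sym //.
- case: (ltngtP (ell b) (ell c)) => hbc; last by rewrite hbc eqxx in dbc.
  + case: (ltngtP (ell a) (ell c)) => hac; last by rewrite hac eqxx in dac.
    * apply: (K b a c hab hac); rewrite ?e1 ?e2 ?e3 // eq_sym //.
    * apply: (K b c a hbc hac); rewrite ?e1 ?e2 ?e3 // eq_sym //.
  + apply: (K c b a hbc hab); rewrite ?e1 ?e2 ?e3 // eq_sym //.
Qed.
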